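(* Let $d=2$, $\varepsilon>0$, $L=q^{-1-\varepsilon/3}$, $l=q^{-L-1}$, fix an environment $\omega$, and let $E=\{\eta:\ 0\text{ belongs to a super-good path of length }l\}$ and $A=\{\eta:\ \eta_0=i\}$. Then $E$ and $A$ satisfy the following, with $N=4L^2l$, $D=3L$, $V=3L^2$: for every $\eta\in E$ there exist configurations $\eta_0,\dots,\eta_N$ and sites $x_0,\dots,x_{N-1}$ such that (1) $\eta_0=\eta$; (2) $\eta_N\in A$; (3) $\eta_{i+1}=\eta_i^{x_i}$ or $\eta_{i+1}=\eta_i$; (4) $c_{x_i}(\eta_i)=1$; (5) for all $i\le N$, $\eta_i$ differs from $\eta$ on a set $X$ with $|X|\le D$, and $X$ is contained in a set $Y(x_i)$, depending only on $x_i$, with $|Y(x_i)|\le V$.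
   Context: Environment $\omega\in\{\text{susceptible},\text{immune}\}^{\mathbb{Z}^2}$, $\mathcal{S}$ the set of susceptible sites, configurations $\eta\in\{i,h\}^{\mathcal{S}}$ ($i$ infected, $h$ healthy). For $x\in\mathcal{S}$, $c_x(\eta)=1$ if $x$ has at least 2 nearest neighbours that are susceptible and infected in $\eta$, else $0$; $\eta^x$ is $\eta$ with the state at $x$ flipped. Boxes are the sets $L\hat x+[L]^2$, $\hat x\in\mathbb{Z}^2$, $[L]=\{1,\dots,L\}$ ($L$, $l$ rounded to integers); a path of boxes of length $l$ is a sequence of $l$ distinct boxes whose consecutive indices are nearest neighbours. A box is good (for $\omega,\eta$) if all its sites are susceptible and each of its rows and columns contains at least one infected site; a path is super-good if all its boxes are good and one of them contains a row or column all of whose sites are infected. ''$0$ belongs to the path'' means the box containing the origin is one of its boxes. *)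

(* Defs.v *)
From Stdlib Require Import Reals ZArith List Lia Lra Bool.
Open Scope Z_scope.

Definition site := (Z * Z)%type.

(* Environment: omega x = true iff x is susceptible (false = immune). *)
Definition env := site -> bool.

(* Configuration: eta x = true iff x is infected (i), false = healthy (h).
   Only the values on susceptible sites are meaningful. *)
Definition config := site -> bool.

Definition site_eqb (x y : site) : bool :=
  Z.eqb (fst x) (fst y) && Z.eqb (snd x) (snd y).

Definition flip (eta : config) (x : site) : config :=
  fun y => if site_eqb y x then negb (eta y) else eta y.

Definition neighbours (x : site) : list site :=
  ((fst x + 1, snd x) :: (fst x - 1, snd x) ::
   (fst x, snd x + 1) :: (fst x, snd x - 1) :: nil).

Definition constraint (omega : env) (eta : config) (x : site) : Prop :=
  (2 <= length (filter (fun y => omega y && eta y) (neighbours x)))%nat.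

Definition card_le (P : site -> Prop) (n : nat) : Prop :=
  exists s : list site, (length s <= n)%nat /\ forall x, P x -> In x s.

Definition box_site (L : Z) (b : site) (i j : Z) : site :=
  (L * fst b + i, L * snd b + j).

Definition in_box (L : Z) (b : site) (x : site) : Prop :=
  L * fst b + 1 <= fst x <= L * fst b + L /\
  L * snd b + 1 <= snd x <= L * snd b + L.

Definition good_box (L : Z) (omega : env) (eta : config) (b : site) : Prop :=
  (forall i j, 1 <= i <= L -> 1 <= j <= L -> omega (box_site L b i j) = true) /\
  (forall j, 1 <= j <= L -> exists i, 1 <= i <= L /\ eta (box_site L b i j) = true) /\
  (forall i, 1 <= i <= L -> exists j, 1 <= j <= L /\ eta (box_site L b i j) = true).

Definition has_full_line (L : Z) (eta : config) (b : site) : Prop :=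
  (exists j, 1 <= j <= L /\ forall i, 1 <= i <= L -> eta (box_site L b i j) = true) \/
  (exists i, 1 <= i <= L /\ forall j, 1 <= j <= L -> eta (box_site L b i j) = true).

Definition nn (a b : site) : Prop :=
  Z.abs (fst a - fst b) + Z.abs (snd a - snd b) = 1.

Definition box_path (l : nat) (p : list site) : Prop :=
  length p = l /\ NoDup p /\
  forall k, (S k < length p)%nat -> nn (nth k p (0, 0)) (nth (S k) p (0, 0)).

Definition super_good (L : Z) (omega : env) (eta : config) (p : list site) : Prop :=
  (forall b, In b p -> good_box L omega eta b) /\
  exists b, In b p /\ has_full_line L eta b.

Definition event_E (L : Z) (l : nat) (omega : env) (eta : config) : Prop :=
  exists p, box_path l p /\ super_good L omega eta p /\
            exists b, In b p /\ in_box L b (0, 0).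

(* A : eta_0 = i (the origin is a susceptible, infected site) *)
Definition event_A (omega : env) (eta : config) : Prop :=
  omega (0, 0) = true /\ eta (0, 0) = true.

Definition scaleL (q eps : R) : Z := Int_part (Rpower q (- 1 - eps / 3)).
Definition scalel (q eps : R) : Z :=
  Int_part (Rpower q (- IZR (scaleL q eps) - 1)).

(* Main.v *)
Require Import Defs.
From Stdlib Require Import Reals ZArith List Lia Lra Bool FunctionalExtensionality.
Open Scope Z_scope.

Definition pt (o : bool) (a c : Z) : site := if o then (c, a) else (a, c).
Definition fr (o : bool) (y : site) : site := pt o (fst y) (snd y).

Lemma fr_pt o a c : fr o (pt o a c) = (a, c).
Proof. destruct o; reflexivity. Qed.
Lemma pt_fr o y : pt o (fst (fr o y)) (snd (fr o y)) = y.
Proof. destruct o, y; reflexivity. Qed.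
Lemma pt_inj o a c a' c' : pt o a c = pt o a' c' -> a = a' /\ c = c'.
Proof. destruct o; simpl; intro H; inversion H; auto. Qed.

Lemma nb_pt o a c a' c' : Z.abs (a - a') + Z.abs (c - c') = 1 ->
  In (pt o a' c') (neighbours (pt o a c)).
Proof.
  intros H.
  assert (a' = a + 1 /\ c' = c \/ a' = a - 1 /\ c' = c \/ a' = a /\ c' = c + 1 \/ a' = a /\ c' = c - 1) as H0 by lia.
  destruct o; unfold neighbours, pt; simpl;
  destruct H0 as [[-> ->]|[[-> ->]|[[-> ->]|[-> ->]]]]; auto 10.
Qed.

Lemma filter_one {A} (p : A -> bool) (l : list A) a :
  In a l -> p a = true -> (1 <= length (filter p l))%nat.
Proof.
  induction l as [|h t IH]; simpl; [tauto|].
  intros [<-|Ha] pa; [rewrite pa; simpl; lia|].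
  destruct (p h); simpl; [lia|auto].
Qed.

Lemma filter_two {A} (p : A -> bool) (l : list A) a c :
  In a l -> In c l -> a <> c -> p a = true -> p c = true -> (2 <= length (filter p l))%nat.
Proof.
  induction l as [|h t IH]; simpl; [tauto|].
  intros Ha Hc Hac pa pc.
  destruct Ha as [<-|Ha]; destruct Hc as [<-|Hc].
  - congruence.
  - rewrite pa; simpl. pose proof (filter_one p t c Hc pc). lia.
  - rewrite pc; simpl. pose proof (filter_one p t a Ha pa). lia.
  - destruct (p h); simpl; [pose proof (filter_one p t a Ha pa); lia | auto].
Qed.

Lemma constraint_two omega (s : config) x a c :
  In a (neighbours x) -> In c (neighbours x) -> a <> c ->
  omega a = true -> s a = true -> omega c = true -> s c = true -> constraint omega s x.
Proof.
  intros. unfold constraint. apply (filter_two _ _ a c); auto; apply andb_true_iff; auto.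
Qed.

Lemma nb_neq x : ~ In x (neighbours x).
Proof.
  destruct x as [a b]; unfold neighbours; simpl.
  intros [E|[E|[E|[E|[]]]]]; injection E; lia.
Qed.

Lemma constraint_agree omega (s s' : config) x :
  (forall y, y <> x -> s' y = s y) -> constraint omega s x -> constraint omega s' x.
Proof.
  unfold constraint. intros H.
  assert (E: filter (fun y => omega y && s' y) (neighbours x) = filter (fun y => omega y && s y) (neighbours x)).
  { apply filter_ext_in. intros y Hy. rewrite H; auto. intros ->. exact (nb_neq _ Hy). }
  now rewrite E.
Qed.

Lemma card_mono (P Q : site -> Prop) n : card_le P n -> (forall y, Q y -> P y) -> card_le Q n.
Proof. intros [s [H1 H2]] H. exists s; split; auto. Qed.

Section Dyn.
Variable omega : env.
Variable eta : config.
Variable Y : site -> list site.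
Variable D : nat.

Definition step (s : config) (x : site) (s' : config) : Prop :=
  omega x = true /\ constraint omega s x /\ (forall y, y <> x -> s' y = s y) /\
  (forall y, s y <> eta y -> In y (Y x)) /\ (forall y, s' y <> eta y -> In y (Y x)) /\
  card_le (fun y => s y <> eta y) D /\ card_le (fun y => s' y <> eta y) D.

Inductive run : config -> nat -> config -> Prop :=
| run0 s : run s 0 s
| runS s x s' n s'' : step s x s' -> run s' n s'' -> run s (S n) s''.

Lemma run_trans s1 n1 s2 n2 s3 : run s1 n1 s2 -> run s2 n2 s3 -> run s1 (n1 + n2) s3.
Proof. induction 1; simpl; auto. intros; eapply runS; eauto. Qed.

Lemma run_snoc s1 n s2 x s3 : run s1 n s2 -> step s2 x s3 -> run s1 (S n) s3.
Proof.
  intros H1 H2. replace (S n) with (n + 1)%nat by lia.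
  eapply run_trans; eauto. eapply runS; eauto. constructor.
Qed.

Lemma step_rev s x s' : step s x s' -> step s' x s.
Proof.
  intros (H1&H2&H3&H4&H5&H6&H7). split; [auto|]. split; [|split; [|split; [auto|split; [auto|split; auto]]]].
  - apply (constraint_agree omega s s' x); [|exact H2]. intros y Hy. rewrite (H3 y Hy); reflexivity.
  - intros y Hy; rewrite H3; auto.
Qed.

Lemma run_rev s n s' : run s n s' -> run s' n s.
Proof. induction 1. constructor. apply run_snoc with s' x; [exact IHrun | apply step_rev; exact H]. Qed.

Lemma run_pad s x n : step s x s -> run s n s.
Proof. intros H. induction n. constructor. eapply runS; eauto. Qed.

Variable L : Z.

Section Grow.
Variables (P Q : Z -> site) (mem : Z -> Z -> site -> bool).
Hypothesis Hmem : forall lo hi y, mem lo hi y = true <-> exists k, lo <= k <= hi /\ y = P k.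
Hypothesis HnbP1 : forall k, In (P (k+1)) (neighbours (P k)).
Hypothesis HnbP2 : forall k, In (P (k-1)) (neighbours (P k)).
Hypothesis HnbQ : forall k, In (Q k) (neighbours (P k)).
Hypothesis HQ1 : forall k, Q k <> P (k+1).
Hypothesis HQ2 : forall k, Q k <> P (k-1).
Variable s0 : config.
Hypothesis HQs : forall k, 1 <= k <= L -> omega (Q k) = true /\ s0 (Q k) = true.
Hypothesis HPo : forall k, 1 <= k <= L -> omega (P k) = true.
Variable m : Z.
Hypothesis Hm : 1 <= m <= L.
Hypothesis Hpiv : s0 (P m) = true.
Hypothesis HY : forall k y, 1 <= k <= L -> s0 y <> eta y \/ mem 1 L y = true -> In y (Y (P k)).
Hypothesis Hc : card_le (fun y => s0 y <> eta y \/ mem 1 L y = true) D.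

Let st lo hi := fun y => s0 y || mem lo hi y.

Lemma st_diff lo hi y : 1 <= lo -> hi <= L -> st lo hi y <> eta y -> s0 y <> eta y \/ mem 1 L y = true.
Proof.
  unfold st. intros H1 H2 H. destruct (mem lo hi y) eqn:E.
  - right. apply Hmem in E. destruct E as (k & Hk & ->). apply Hmem. exists k; split; auto; lia.
  - left. rewrite orb_false_r in H. auto.
Qed.

Lemma mem_up lo hi y : lo <= hi + 1 -> y <> P (hi + 1) -> mem lo (hi + 1) y = mem lo hi y.
Proof.
  intros H1 H2. apply eq_iff_eq_true. rewrite !Hmem. split.
  - intros (k & Hk & ->). exists k. split; auto. assert (k <> hi + 1) by (intros ->; auto). lia.
  - intros (k & Hk & ->). exists k. split; auto. lia.
Qed.

Lemma mem_down lo hi y : lo - 1 <= hi -> y <> P (lo - 1) -> mem (lo - 1) hi y = mem lo hi y.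
Proof.
  intros H1 H2. apply eq_iff_eq_true. rewrite !Hmem. split.
  - intros (k & Hk & ->). exists k. split; auto. assert (k <> lo - 1) by (intros ->; auto). lia.
  - intros (k & Hk & ->). exists k. split; auto. lia.
Qed.

Lemma P_in lo hi k : lo <= k <= hi -> mem lo hi (P k) = true.
Proof. intros H. apply Hmem. exists k; auto. Qed.

Lemma step_common lo hi lo' hi' x :
  1 <= lo -> hi <= L -> 1 <= lo' -> hi' <= L ->
  (exists k, 1 <= k <= L /\ x = P k) ->
  omega x = true -> constraint omega (st lo hi) x -> (forall y, y <> x -> st lo' hi' y = st lo hi y) ->
  step (st lo hi) x (st lo' hi').
Proof.
  intros H1 H2 H3 H4 (k & Hk & ->) Ho Hcn Hag.
  repeat split; auto.
  - intros y Hy. apply HY; auto. apply (st_diff lo hi); auto.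
  - intros y Hy. apply HY; auto. apply (st_diff lo' hi'); auto.
  - eapply card_mono; [exact Hc|]. intros y Hy. apply (st_diff lo hi); auto.
  - eapply card_mono; [exact Hc|]. intros y Hy. apply (st_diff lo' hi'); auto.
Qed.

Lemma phase1 : forall t : nat, Z.of_nat t <= L - m -> run s0 t (st m (m + Z.of_nat t)).
Proof.
  induction t; intros Ht.
  - replace (st m (m + Z.of_nat 0)) with s0. constructor.
    apply functional_extensionality. intro y. unfold st. simpl. rewrite Z.add_0_r.
    destruct (mem m m y) eqn:E; [|rewrite orb_false_r; auto].
    apply Hmem in E. destruct E as (k & Hk & ->). assert (k = m) by lia. subst. rewrite Hpiv. auto.
  - eapply run_snoc. apply IHt. lia.
    rewrite Nat2Z.inj_succ. unfold Z.succ.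
    set (h := m + Z.of_nat t).
    replace (m + (Z.of_nat t + 1)) with (h + 1) by (unfold h; lia).
    apply step_common; try lia.
    + exists (h + 1). split; [unfold h; lia|auto].
    + apply HPo. unfold h; lia.
    + apply (constraint_two omega _ _ (P h) (Q (h+1))).
      * replace h with (h + 1 - 1) at 1 by lia. auto.
      * auto.
      * intro E. apply (HQ2 (h+1)). rewrite <- E. f_equal. lia.
      * apply HPo. unfold h; lia.
      * unfold st. rewrite P_in; [apply orb_true_r| unfold h; lia].
      * apply HQs. unfold h; lia.
      * unfold st. rewrite (proj2 (HQs (h+1) ltac:(unfold h; lia))). auto.
    + intros y Hy. unfold st. rewrite mem_up; auto. unfold h; lia.
Qed.

Lemma phase2 : forall t : nat, Z.of_nat t <= m - 1 -> run (st m L) t (st (m - Z.of_nat t) L).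
Proof.
  induction t; intros Ht.
  - simpl. rewrite Z.sub_0_r. constructor.
  - eapply run_snoc. apply IHt. lia.
    rewrite Nat2Z.inj_succ. unfold Z.succ.
    set (h := m - Z.of_nat t).
    replace (m - (Z.of_nat t + 1)) with (h - 1) by (unfold h; lia).
    apply step_common; try lia.
    + exists (h - 1). split; [unfold h; lia|auto].
    + apply HPo. unfold h; lia.
    + apply (constraint_two omega _ _ (P h) (Q (h-1))).
      * replace h with (h - 1 + 1) at 1 by lia. auto.
      * auto.
      * intro E. apply (HQ1 (h-1)). rewrite <- E. f_equal. lia.
      * apply HPo. unfold h; lia.
      * unfold st. rewrite P_in; [apply orb_true_r| unfold h; lia].
      * apply HQs. unfold h; lia.
      * unfold st. rewrite (proj2 (HQs (h-1) ltac:(unfold h; lia))). auto.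
    + intros y Hy. unfold st. rewrite mem_down; auto. unfold h; lia.
Qed.

Lemma grow : run s0 (Z.to_nat (L - 1)) (fun y => s0 y || mem 1 L y).
Proof.
  replace (Z.to_nat (L - 1)) with (Z.to_nat (L - m) + Z.to_nat (m - 1))%nat by lia.
  eapply run_trans.
  - replace L with (m + Z.of_nat (Z.to_nat (L - m))) at 2 by lia.
    apply phase1. lia.
  - pose proof (phase2 (Z.to_nat (m - 1)) ltac:(lia)) as H.
    replace (m - Z.of_nat (Z.to_nat (m - 1))) with 1 in H by lia.
    replace (m + Z.of_nat (Z.to_nat (L - m))) with L by lia.
    exact H.
Qed.
End Grow.

Lemma move (PA PB : Z -> site) (memA memB : Z -> Z -> site -> bool)
  (HmA : forall lo hi y, memA lo hi y = true <-> exists k, lo <= k <= hi /\ y = PA k)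
  (HmB : forall lo hi y, memB lo hi y = true <-> exists k, lo <= k <= hi /\ y = PB k)
  (HA1 : forall k, In (PA (k+1)) (neighbours (PA k)))
  (HA2 : forall k, In (PA (k-1)) (neighbours (PA k)))
  (HB1 : forall k, In (PB (k+1)) (neighbours (PB k)))
  (HB2 : forall k, In (PB (k-1)) (neighbours (PB k)))
  (HAB : forall k, In (PB k) (neighbours (PA k)))
  (HBA : forall k, In (PA k) (neighbours (PB k)))
  (HAB1 : forall k, PA k <> PB (k+1)) (HAB2 : forall k, PA k <> PB (k-1))
  (HBA1 : forall k, PB k <> PA (k+1)) (HBA2 : forall k, PB k <> PA (k-1))
  (tau : config)
  (HoA : forall k, 1 <= k <= L -> omega (PA k) = true)
  (HoB : forall k, 1 <= k <= L -> omega (PB k) = true)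
  mA (HmA' : 1 <= mA <= L) (HpA : tau (PA mA) = true)
  mB (HmB' : 1 <= mB <= L) (HpB : tau (PB mB) = true)
  (HY : forall k y, 1 <= k <= L -> tau y <> eta y \/ memA 1 L y = true \/ memB 1 L y = true ->
        In y (Y (PA k)) /\ In y (Y (PB k)))
  (Hc : card_le (fun y => tau y <> eta y \/ memA 1 L y = true \/ memB 1 L y = true) D) :
  run (fun y => tau y || memA 1 L y) (2 * Z.to_nat (L - 1)) (fun y => tau y || memB 1 L y).
Proof.
  replace (2 * Z.to_nat (L-1))%nat with (Z.to_nat (L-1) + Z.to_nat (L-1))%nat by lia.
  apply run_trans with (s2 := fun y => (tau y || memA 1 L y) || memB 1 L y).
  - apply grow with (P := PB) (Q := PA) (m := mB); auto.
    + intros k Hk. split; auto. rewrite (proj2 (HmA 1 L (PA k)) ltac:(exists k; auto)). apply orb_true_r.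
    + rewrite HpB; auto.
    + intros k y Hk Hy. apply (HY k y Hk). destruct Hy as [Hy|Hy]; auto.
      destruct (memA 1 L y); auto. rewrite orb_false_r in Hy. auto.
    + eapply card_mono; [exact Hc|]. intros y Hy. destruct Hy as [Hy|Hy]; auto.
      destruct (memA 1 L y); auto. rewrite orb_false_r in Hy. auto.
  - replace (fun y => (tau y || memA 1 L y) || memB 1 L y) with (fun y => (tau y || memB 1 L y) || memA 1 L y).
    2:{ apply functional_extensionality; intro y. destruct (tau y), (memA 1 L y), (memB 1 L y); reflexivity. }
    apply run_rev.
    apply grow with (P := PA) (Q := PB) (m := mA); auto.
    + intros k Hk. split; auto. rewrite (proj2 (HmB 1 L (PB k)) ltac:(exists k; auto)). apply orb_true_r.
    + rewrite HpA; auto.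
    + intros k y Hk Hy. apply (HY k y Hk). destruct Hy as [Hy|Hy]; auto.
      destruct (memB 1 L y); auto. rewrite orb_false_r in Hy. auto.
    + eapply card_mono; [exact Hc|]. intros y Hy. destruct Hy as [Hy|Hy]; auto.
      destruct (memB 1 L y); auto. rewrite orb_false_r in Hy. auto.
Qed.

End Dyn.

Definition rectl (a1 a2 : Z) (n : nat) : list site :=
  flat_map (fun i => map (fun j => (a1 + Z.of_nat i, a2 + Z.of_nat j)) (seq 0 n)) (seq 0 n).
Definition Yf (L : Z) (x : site) : list site :=
  rectl (L * ((fst x - 1) / L)) (L * ((snd x - 1) / L)) (Z.to_nat (L + 2)).

Lemma flat_map_len (f : nat -> list site) (l : list nat) n :
  (forall i, length (f i) = n) -> length (flat_map f l) = (length l * n)%nat.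
Proof. intros H. induction l; simpl; auto. rewrite length_app, H, IHl. lia. Qed.

Lemma rectl_len a1 a2 n : length (rectl a1 a2 n) = (n * n)%nat.
Proof.
  unfold rectl. rewrite (flat_map_len _ _ n). rewrite length_seq; auto.
  intros i. rewrite length_map, length_seq. auto.
Qed.

Lemma rectl_in a1 a2 n y : a1 <= fst y < a1 + Z.of_nat n -> a2 <= snd y < a2 + Z.of_nat n ->
  In y (rectl a1 a2 n).
Proof.
  intros H1 H2. unfold rectl. apply in_flat_map. exists (Z.to_nat (fst y - a1)). split.
  - apply in_seq. lia.
  - apply in_map_iff. exists (Z.to_nat (snd y - a2)). split.
    + destruct y; simpl in *; f_equal; lia.
    + apply in_seq. lia.
Qed.

Definition inbox (L : Z) (b x : site) :=
  L * fst b + 1 <= fst x <= L * fst b + L /\ L * snd b + 1 <= snd x <= L * snd b + L.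
Definition inrect (L : Z) (b y : site) :=
  L * fst b <= fst y <= L * fst b + L + 1 /\ L * snd b <= snd y <= L * snd b + L + 1.

Lemma Y_spec L b x y : 0 < L -> inbox L b x -> inrect L b y -> In y (Yf L x).
Proof.
  intros HL [H1 H2] [H3 H4]. unfold Yf.
  assert (E1 : (fst x - 1) / L = fst b) by (symmetry; apply Z.div_unique with (r := fst x - 1 - L * fst b); lia).
  assert (E2 : (snd x - 1) / L = snd b) by (symmetry; apply Z.div_unique with (r := snd x - 1 - L * snd b); lia).
  rewrite E1, E2. apply rectl_in; lia.
Qed.

Lemma Yf_len L x : 3 <= L -> (length (Yf L x) <= 3 * Z.to_nat L * Z.to_nat L)%nat.
Proof. intros HL. unfold Yf. rewrite rectl_len. nia. Qed.

Lemma bound (Ln K l a n T : nat) : (3 <= Ln -> a <= Ln - 1 -> T <= 2 * Ln -> n <= (2 * Ln * K + (Ln - 1)) * T -> K < l -> a * T + n <= 4 * Ln * Ln * l)%nat.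
Proof.
  Open Scope nat_scope.
  intros H1 H2 H3 H4 H5.
  destruct Ln as [|m]; [lia|]. replace (S m - 1) with m in * by lia.
  assert (a * T <= m * T) by (apply Nat.mul_le_mono_r; lia).
  assert ((2 * S m * K + m) * T + m * T <= 2 * S m * (K + 1) * T) by nia.
  assert (2 * S m * (K + 1) * T <= 2 * S m * (K + 1) * (2 * S m)) by (apply Nat.mul_le_mono_l; lia).
  assert (2 * S m * (K + 1) * (2 * S m) <= 4 * S m * S m * l) by nia.
  lia.
Qed.
Close Scope nat_scope.

Section Geo.
Variable L : Z.
Hypothesis HL : 3 <= L.

Definition Pl o (b : site) (j k : Z) : site := pt o (L * fst (fr o b) + k) (L * snd (fr o b) + j).
Definition memL o (b : site) (j lo hi : Z) (y : site) : bool :=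
  (snd (fr o y) =? L * snd (fr o b) + j) && (L * fst (fr o b) + lo <=? fst (fr o y)) &&
  (fst (fr o y) <=? L * fst (fr o b) + hi).

Lemma memL_spec o b j lo hi y : memL o b j lo hi y = true <-> exists k, lo <= k <= hi /\ y = Pl o b j k.
Proof.
  unfold memL, Pl. split.
  - rewrite !andb_true_iff, Z.eqb_eq, !Z.leb_le. intros [[H1 H2] H3].
    exists (fst (fr o y) - L * fst (fr o b)). split; [lia|]. rewrite <- (pt_fr o y) at 1. f_equal; lia.
  - intros (k & Hk & ->). rewrite fr_pt. simpl. rewrite !andb_true_iff, Z.eqb_eq, !Z.leb_le. lia.
Qed.

Lemma Pl_nb o b j k j' k' : Z.abs (k - k') + Z.abs (j - j') = 1 -> In (Pl o b j' k') (neighbours (Pl o b j k)).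
Proof. intros H. unfold Pl. apply nb_pt. lia. Qed.

Lemma Pl_neq o b j k j' k' : (j <> j' \/ k <> k') -> Pl o b j k <> Pl o b j' k'.
Proof. intros H E. unfold Pl in E. apply pt_inj in E. lia. Qed.

Lemma Pl_neg o b j k : Pl (negb o) b j k = Pl o b k j.
Proof. destruct o, b; reflexivity. Qed.

Lemma fr_neg o y : fr (negb o) y = (snd (fr o y), fst (fr o y)).
Proof. destruct o, y; reflexivity. Qed.

Lemma Pl_inbox o b j k : 1 <= j <= L -> 1 <= k <= L -> inbox L b (Pl o b j k).
Proof. destruct o, b; unfold inbox, Pl, pt, fr; simpl; lia. Qed.

Lemma memL_rect o b j lo hi y : memL o b j lo hi y = true -> 0 <= j <= L + 1 -> 0 <= lo -> hi <= L + 1 ->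
  inrect L b y.
Proof.
  intros H Hj Hlo Hhi. apply memL_spec in H. destruct H as (k & Hk & ->).
  destruct o, b; unfold inrect, Pl, pt, fr; simpl; lia.
Qed.

Definition lineList o b j := map (fun n => Pl o b j (Z.of_nat n + 1)) (seq 0 (Z.to_nat L)).

Lemma lineList_len o b j : length (lineList o b j) = Z.to_nat L.
Proof. unfold lineList. rewrite length_map, length_seq. auto. Qed.

Lemma lineList_in o b j lo hi y : memL o b j lo hi y = true -> 1 <= lo -> hi <= L -> In y (lineList o b j).
Proof.
  intros H H1 H2. apply memL_spec in H. destruct H as (k & Hk & ->).
  unfold lineList. apply in_map_iff. exists (Z.to_nat (k - 1)). split.
  - f_equal. lia.
  - apply in_seq. lia.
Qed.

Lemma shift_Pl o b b' e j k : fr o b' = (fst (fr o b), snd (fr o b) + e) -> Pl o b (j + L * e) k = Pl o b' j k.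
Proof. intros E. unfold Pl. rewrite E. simpl. f_equal. ring. Qed.

Lemma shift_memL o b b' e j lo hi y : fr o b' = (fst (fr o b), snd (fr o b) + e) ->
  memL o b (j + L * e) lo hi y = memL o b' j lo hi y.
Proof.
  intros E. apply eq_iff_eq_true. rewrite !memL_spec. split; intros (k & Hk & ->); exists k; split; auto;
  rewrite (shift_Pl o b b' e); auto.
Qed.

Lemma nn_fr o b b' : nn b b' ->
  Z.abs (fst (fr o b') - fst (fr o b)) + Z.abs (snd (fr o b') - snd (fr o b)) = 1.
Proof. destruct o, b, b'; unfold nn, fr, pt; simpl; lia. Qed.

Lemma fr_neg_eq o b b' e : fr o b' = (fst (fr o b) + e, snd (fr o b)) ->
  fr (negb o) b' = (fst (fr (negb o) b), snd (fr (negb o) b) + e).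
Proof. intros E. rewrite !fr_neg, E. reflexivity. Qed.

Section Conf.
Variable omega : env.
Variable eta : config.

Definition Dn := (3 * Z.to_nat L)%nat.
Definition T := (2 * Z.to_nat (L - 1))%nat.
Notation Yl := (Yf L).
Notation runL := (run omega eta Yl Dn).
Notation stepL := (step omega eta Yl Dn).

Lemma gb_omega o b j k : good_box L omega eta b -> 1 <= j <= L -> 1 <= k <= L -> omega (Pl o b j k) = true.
Proof.
  intros [H _] Hj Hk. destruct o, b; unfold Pl, pt, fr; simpl.
  - apply (H j k); auto.
  - apply (H k j); auto.
Qed.

Lemma gb_piv o b j : good_box L omega eta b -> 1 <= j <= L -> exists m, 1 <= m <= L /\ eta (Pl o b j m) = true.
Proof.
  intros [_ [H2 H3]] Hj. destruct o, b; unfold Pl, pt, fr; simpl.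
  - destruct (H3 j Hj) as (m & Hm & E). exists m; auto.
  - destruct (H2 j Hj) as (m & Hm & E). exists m; auto.
Qed.

Lemma fmove o b j s tau : (s = 1 \/ s = -1) ->
  (forall k, 1 <= k <= L -> omega (Pl o b j k) = true /\ omega (Pl o b (j + s) k) = true) ->
  (exists mA, 1 <= mA <= L /\ tau (Pl o b j mA) = true) ->
  (exists mB, 1 <= mB <= L /\ tau (Pl o b (j + s) mB) = true) ->
  (forall k y, 1 <= k <= L -> tau y <> eta y \/ memL o b j 1 L y = true \/ memL o b (j + s) 1 L y = true ->
        In y (Yl (Pl o b j k)) /\ In y (Yl (Pl o b (j + s) k))) ->
  card_le (fun y => tau y <> eta y \/ memL o b j 1 L y = true \/ memL o b (j + s) 1 L y = true) Dn ->
  runL (fun y => tau y || memL o b j 1 L y) T (fun y => tau y || memL o b (j + s) 1 L y).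
Proof.
  intros Hs Ho (mA & HmA & HpA) (mB & HmB & HpB) HY Hc.
  unfold T. apply move with (PA := Pl o b j) (PB := Pl o b (j + s)) (mA := mA) (mB := mB); auto;
  try (intros; apply memL_spec); try (intros; apply Pl_nb; lia); try (intros; apply Pl_neq; lia);
  intros k Hk; apply Ho; auto.
Qed.

Definition lineS o b j : config := fun y => eta y || memL o b j 1 L y.

Lemma card3 (A B C : site -> Prop) l1 l2 l3 :
  length l1 = Z.to_nat L -> length l2 = Z.to_nat L -> length l3 = Z.to_nat L ->
  (forall y, A y -> In y l1) -> (forall y, B y -> In y l2) -> (forall y, C y -> In y l3) ->
  card_le (fun y => A y \/ B y \/ C y) Dn.
Proof.
  intros E1 E2 E3 H1 H2 H3. exists (l1 ++ l2 ++ l3). split.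
  - rewrite !length_app. unfold Dn. lia.
  - intros y [Hy|[Hy|Hy]]; apply in_or_app; [left|right; apply in_or_app..]; auto.
Qed.

Lemma pmove_in o b j s : good_box L omega eta b -> (s = 1 \/ s = -1) -> 1 <= j <= L -> 1 <= j + s <= L ->
  runL (lineS o b j) T (lineS o b (j + s)).
Proof.
  intros Hg Hs Hj Hjs. unfold lineS. apply fmove; auto.
  - intros k Hk; split; apply gb_omega; auto.
  - destruct (gb_piv o b j Hg Hj) as (m & Hm & E); exists m; auto.
  - destruct (gb_piv o b (j+s) Hg Hjs) as (m & Hm & E); exists m; auto.
  - intros k y Hk Hy. assert (inrect L b y).
    { destruct Hy as [Hy|[Hy|Hy]]; [congruence| |]; eapply memL_rect; eauto; lia. }
    split; apply Y_spec with b; auto; try lia; apply Pl_inbox; auto.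
  - apply card3 with (lineList o b j) (lineList o b j) (lineList o b (j + s)); try apply lineList_len.
    + intros y Hy; congruence.
    + intros y Hy; eapply lineList_in; eauto; lia.
    + intros y Hy; eapply lineList_in; eauto; lia.
Qed.

Lemma orb_diff (e k : bool) : (e || k) <> e -> k = true.
Proof. destruct e, k; simpl; congruence. Qed.

Lemma pcross o b b' e j0 : good_box L omega eta b -> good_box L omega eta b' -> (e = 1 \/ e = -1) ->
  fr o b' = (fst (fr o b), snd (fr o b) + e) -> j0 = (if Z.eqb e 1 then L else 1) ->
  runL (lineS o b j0) T (lineS o b' (j0 + e - L * e)).
Proof.
  intros Hg Hg' He E Hj0.
  assert (Hj' : 1 <= j0 + e - L * e <= L) by (destruct He; subst; simpl; lia).
  assert (Hj0' : 1 <= j0 <= L) by (destruct He; subst; simpl; lia).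
  assert (HP : forall k, Pl o b (j0 + e) k = Pl o b' (j0 + e - L*e) k).
  { intros k. rewrite <- (shift_Pl o b b' e); auto. f_equal; ring. }
  assert (HM : forall y, memL o b j0 1 L y = memL o b' (j0 - L * e) 1 L y).
  { intros y. rewrite <- (shift_memL o b b' e); auto. f_equal; ring. }
  assert (HM2 : forall y, memL o b (j0 + e) 1 L y = memL o b' (j0 + e - L * e) 1 L y).
  { intros y. rewrite <- (shift_memL o b b' e); auto. f_equal; ring. }
  replace (lineS o b' (j0 + e - L*e)) with (lineS o b (j0 + e)).
  2:{ unfold lineS; apply functional_extensionality; intro y. rewrite HM2. auto. }
  unfold lineS. apply fmove; auto.
  - intros k Hk; split; [apply gb_omega; auto|rewrite HP; apply gb_omega; auto].
  - destruct (gb_piv o b j0 Hg Hj0') as (m & Hm & E'); exists m; auto.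
  - destruct (gb_piv o b' _ Hg' Hj') as (m & Hm & E'); exists m; rewrite HP; auto.
  - intros k y Hk Hy. destruct Hy as [Hy|Hy]; [congruence|]. split.
    + apply Y_spec with b; [lia| apply Pl_inbox; auto|].
      destruct Hy as [Hy|Hy]; eapply memL_rect; eauto; destruct He; subst e; simpl in Hj0; subst j0; lia.
    + rewrite HP. apply Y_spec with b'; [lia| apply Pl_inbox; auto|]. rewrite HM, HM2 in Hy.
      destruct Hy as [Hy|Hy]; eapply memL_rect; eauto; destruct He; subst e; simpl in Hj0; subst j0; lia.
  - apply card3 with (lineList o b j0) (lineList o b j0) (lineList o b (j0 + e)); try apply lineList_len.
    + intros y Hy; congruence.
    + intros y Hy; eapply lineList_in; eauto; lia.
    + intros y Hy; eapply lineList_in; eauto; lia.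
Qed.

Lemma sweep_up o b : good_box L omega eta b -> forall (t : nat) j, 1 <= j -> j + Z.of_nat t <= L ->
  runL (lineS o b j) (t * T) (lineS o b (j + Z.of_nat t)).
Proof.
  intros Hg. induction t; intros j H1 H2.
  - simpl. rewrite Z.add_0_r. constructor.
  - replace (S t * T)%nat with (t * T + T)%nat by lia.
    eapply run_trans. apply IHt; lia.
    replace (j + Z.of_nat (S t)) with (j + Z.of_nat t + 1) by lia.
    apply pmove_in; auto; lia.
Qed.

Lemma sweep_down o b : good_box L omega eta b -> forall (t : nat) j, j <= L -> 1 <= j - Z.of_nat t ->
  runL (lineS o b j) (t * T) (lineS o b (j - Z.of_nat t)).
Proof.
  intros Hg. induction t; intros j H1 H2.
  - simpl. rewrite Z.sub_0_r. constructor.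
  - replace (S t * T)%nat with (t * T + T)%nat by lia.
    eapply run_trans. apply IHt; lia.
    replace (j - Z.of_nat (S t)) with (j - Z.of_nat t + -1) by lia.
    apply pmove_in; auto; lia.
Qed.

Lemma sweep o b j j' : good_box L omega eta b -> 1 <= j <= L -> 1 <= j' <= L ->
  runL (lineS o b j) (Z.to_nat (Z.abs (j - j')) * T) (lineS o b j').
Proof.
  intros Hg Hj Hj'. destruct (Z.le_gt_cases j j').
  - pose proof (sweep_up o b Hg (Z.to_nat (Z.abs (j - j'))) j ltac:(lia) ltac:(lia)) as H'.
    replace (j + Z.of_nat (Z.to_nat (Z.abs (j - j')))) with j' in H' by lia. exact H'.
  - pose proof (sweep_down o b Hg (Z.to_nat (Z.abs (j - j'))) j ltac:(lia) ltac:(lia)) as H'.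
    replace (j - Z.of_nat (Z.to_nat (Z.abs (j - j')))) with j' in H' by lia. exact H'.
Qed.

Ltac crush o b :=
  apply functional_extensionality; let y := fresh "y" in intro y;
  unfold lineS, memL; rewrite ?negb_involutive, ?fr_neg;
  destruct (eta y); destruct (fr o y) as [y1 y2]; destruct (fr o b) as [b1 b2]; cbn [fst snd];
  repeat match goal with
  | |- context [Z.eqb ?a ?b] => destruct (Z.eqb_spec a b)
  | |- context [Z.leb ?a ?b] => destruct (Z.leb_spec a b)
  end; cbn [andb orb negb]; try reflexivity; try lia.

Definition Kst o b c j0 s (t : nat) : config := fun y =>
  (eta y || memL (negb o) b c (Z.min j0 (j0 + s * Z.of_nat t)) (Z.max j0 (j0 + s * Z.of_nat t)) y)
  || memL o b (j0 + s * Z.of_nat t) 1 L y.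

Lemma keep o b c j0 s : good_box L omega eta b -> 1 <= c <= L -> (s = 1 \/ s = -1) -> 1 <= j0 <= L ->
  forall t : nat, 1 <= j0 + s * Z.of_nat t <= L -> runL (lineS o b j0) (t * T) (Kst o b c j0 s t).
Proof.
  intros Hg Hc Hs Hj0. induction t; intros Ht.
  - replace (Kst o b c j0 s 0) with (lineS o b j0). constructor.
    unfold Kst. destruct Hs; subst; crush o b.
  - replace (S t * T)%nat with (t * T + T)%nat by lia.
    eapply run_trans. apply IHt; lia.
    set (tau := fun y => eta y || memL (negb o) b c (Z.min j0 (j0 + s * Z.of_nat t)) (Z.max j0 (j0 + s * Z.of_nat t)) y).
    replace (Kst o b c j0 s (S t)) with (fun y => tau y || memL o b (j0 + s * Z.of_nat t + s) 1 L y).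
    2:{ unfold tau, Kst. destruct Hs; subst; crush o b. }
    change (Kst o b c j0 s t) with (fun y => tau y || memL o b (j0 + s * Z.of_nat t) 1 L y).
    assert (H1 : 1 <= j0 + s * Z.of_nat t <= L) by (destruct Hs; subst; lia).
    assert (H2 : 1 <= j0 + s * Z.of_nat t + s <= L) by (destruct Hs; subst; lia).
    assert (Htau : forall y, tau y <> eta y -> memL (negb o) b c (Z.min j0 (j0 + s * Z.of_nat t)) (Z.max j0 (j0 + s * Z.of_nat t)) y = true).
    { intros y Hy. unfold tau in Hy. eapply orb_diff; eauto. }
    apply fmove; auto.
    + intros k Hk; split; apply gb_omega; auto.
    + exists c. split; auto. unfold tau. rewrite (proj2 (memL_spec _ _ _ _ _ _)); [apply orb_true_r|].
      exists (j0 + s * Z.of_nat t). split; [lia|]. rewrite Pl_neg. auto.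
    + destruct (gb_piv o b _ Hg H2) as (m & Hm & E); exists m; split; auto. unfold tau; rewrite E; auto.
    + intros k y Hk Hy. assert (inrect L b y).
      { destruct Hy as [Hy|[Hy|Hy]]; [apply Htau in Hy| |]; eapply memL_rect; eauto; lia. }
      split; apply Y_spec with b; auto; try lia; apply Pl_inbox; auto.
    + apply card3 with (lineList (negb o) b c) (lineList o b (j0 + s * Z.of_nat t)) (lineList o b (j0 + s * Z.of_nat t + s)); try apply lineList_len.
      * intros y Hy; apply Htau in Hy; eapply lineList_in; eauto; lia.
      * intros y Hy; eapply lineList_in; eauto; lia.
      * intros y Hy; eapply lineList_in; eauto; lia.
Qed.

Definition Est o b r k0 k1 s (t : nat) : config := fun y =>
  (eta y || memL (negb o) b r (Z.min (k0 + s * Z.of_nat t) k1) (Z.max (k0 + s * Z.of_nat t) k1) y)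
  || memL o b (k0 + s * Z.of_nat t) 1 L y.

Lemma eat o b r k0 k1 s : good_box L omega eta b -> 1 <= r <= L -> (s = 1 \/ s = -1) -> 1 <= k0 <= L ->
  1 <= k1 <= L -> 0 <= s * (k1 - k0) ->
  forall t : nat, 0 <= s * (k1 - k0 - s * Z.of_nat t) -> runL (Est o b r k0 k1 s 0) (t * T) (Est o b r k0 k1 s t).
Proof.
  intros Hg Hr Hs Hk0 Hk1 Hd. induction t; intros Ht.
  - constructor.
  - replace (S t * T)%nat with (t * T + T)%nat by lia.
    eapply run_trans. apply IHt; destruct Hs; subst; lia.
    set (tau := fun y => eta y || memL (negb o) b r (Z.min (k0 + s * Z.of_nat (S t)) k1) (Z.max (k0 + s * Z.of_nat (S t)) k1) y).
    replace (Est o b r k0 k1 s (S t)) with (fun y => tau y || memL o b (k0 + s * Z.of_nat t + s) 1 L y).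
    2:{ unfold tau, Est. destruct Hs; subst; crush o b. }
    replace (Est o b r k0 k1 s t) with (fun y => tau y || memL o b (k0 + s * Z.of_nat t) 1 L y).
    2:{ unfold tau, Est. destruct Hs; subst; crush o b. }
    assert (H1 : 1 <= k0 + s * Z.of_nat t <= L) by (destruct Hs; subst; lia).
    assert (H2 : 1 <= k0 + s * Z.of_nat t + s <= L) by (destruct Hs; subst; lia).
    assert (Htau : forall y, tau y <> eta y -> memL (negb o) b r (Z.min (k0 + s * Z.of_nat (S t)) k1) (Z.max (k0 + s * Z.of_nat (S t)) k1) y = true).
    { intros y Hy. unfold tau in Hy. eapply orb_diff; eauto. }
    apply fmove; auto.
    + intros k Hk; split; apply gb_omega; auto.
    + destruct (gb_piv o b _ Hg H1) as (m & Hm & E); exists m; split; auto. unfold tau; rewrite E; auto.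
    + destruct (gb_piv o b _ Hg H2) as (m & Hm & E); exists m; split; auto. unfold tau; rewrite E; auto.
    + intros k y Hk Hy. assert (inrect L b y).
      { destruct Hy as [Hy|[Hy|Hy]]; [apply Htau in Hy| |]; eapply memL_rect; eauto; destruct Hs; subst; lia. }
      split; apply Y_spec with b; auto; try lia; apply Pl_inbox; auto.
    + apply card3 with (lineList (negb o) b r) (lineList o b (k0 + s * Z.of_nat t)) (lineList o b (k0 + s * Z.of_nat t + s)); try apply lineList_len.
      * intros y Hy; apply Htau in Hy; eapply lineList_in; eauto; destruct Hs; subst; lia.
      * intros y Hy; eapply lineList_in; eauto; lia.
      * intros y Hy; eapply lineList_in; eauto; lia.
Qed.

Lemma turn o b j0 s c e k1 : good_box L omega eta b ->
  ((j0 = 1 /\ s = 1) \/ (j0 = L /\ s = -1)) ->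
  ((e = 1 /\ c = 1 /\ k1 = L) \/ (e = -1 /\ c = L /\ k1 = 1)) ->
  runL (lineS o b j0) (Z.to_nat (L-1) * T + Z.to_nat (L-1) * T) (lineS (negb o) b k1).
Proof.
  intros Hg Hj Hc.
  destruct Hj as [[-> ->]|[-> ->]]; destruct Hc as [[-> [-> ->]]|[-> [-> ->]]].
  - eapply run_trans. apply (keep o b 1 1 1); auto; lia.
    replace (Kst o b 1 1 1 (Z.to_nat (L - 1))) with (Est (negb o) b L 1 L 1 0).
    2:{ unfold Kst, Est. crush o b. }
    replace (lineS (negb o) b L) with (Est (negb o) b L 1 L 1 (Z.to_nat (L-1))).
    2:{ unfold Est. crush o b. }
    apply eat; auto; lia.
  - eapply run_trans. apply (keep o b L 1 1); auto; lia.
    replace (Kst o b L 1 1 (Z.to_nat (L - 1))) with (Est (negb o) b L L 1 (-1) 0).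
    2:{ unfold Kst, Est. crush o b. }
    replace (lineS (negb o) b 1) with (Est (negb o) b L L 1 (-1) (Z.to_nat (L-1))).
    2:{ unfold Est. crush o b. }
    apply eat; auto; lia.
  - eapply run_trans. apply (keep o b 1 L (-1)); auto; lia.
    replace (Kst o b 1 L (-1) (Z.to_nat (L - 1))) with (Est (negb o) b 1 1 L 1 0).
    2:{ unfold Kst, Est. crush o b. }
    replace (lineS (negb o) b L) with (Est (negb o) b 1 1 L 1 (Z.to_nat (L-1))).
    2:{ unfold Est. crush o b. }
    apply eat; auto; lia.
  - eapply run_trans. apply (keep o b L L (-1)); auto; lia.
    replace (Kst o b L L (-1) (Z.to_nat (L - 1))) with (Est (negb o) b 1 L 1 (-1) 0).
    2:{ unfold Kst, Est. crush o b. }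
    replace (lineS (negb o) b 1) with (Est (negb o) b 1 L 1 (-1) (Z.to_nat (L-1))).
    2:{ unfold Est. crush o b. }
    apply eat; auto; lia.
Qed.

Lemma exit o b b' j : good_box L omega eta b -> good_box L omega eta b' -> nn b b' -> (j = 1 \/ j = L) ->
  exists o' j' n, (j' = 1 \/ j' = L) /\ (n <= (2 * Z.to_nat L - 1) * T)%nat /\ runL (lineS o b j) n (lineS o' b' j').
Proof.
  intros Hg Hg' Hnn Hj. pose proof (nn_fr o b b' Hnn) as Hd.
  assert (HT : (Z.to_nat (L - 1) = Z.to_nat L - 1)%nat) by lia.
  assert (Hc : (fst (fr o b') - fst (fr o b) = 0 /\ snd (fr o b') - snd (fr o b) = 1) \/
               (fst (fr o b') - fst (fr o b) = 0 /\ snd (fr o b') - snd (fr o b) = -1) \/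
               (fst (fr o b') - fst (fr o b) = 1 /\ snd (fr o b') - snd (fr o b) = 0) \/
               (fst (fr o b') - fst (fr o b) = -1 /\ snd (fr o b') - snd (fr o b) = 0)) by lia.
  destruct Hc as [[H1 H2]|[[H1 H2]|[[H1 H2]|[H1 H2]]]].
  - assert (E : fr o b' = (fst (fr o b), snd (fr o b) + 1)) by (rewrite (surjective_pairing (fr o b')); f_equal; lia).
    exists o, 1, (Z.to_nat (Z.abs (j - L)) * T + T)%nat. split; [auto|split].
    + assert (Z.to_nat (Z.abs (j - L)) <= Z.to_nat L - 1)%nat by lia. nia.
    + eapply run_trans. apply (sweep o b j L); auto; lia.
      pose proof (pcross o b b' 1 L Hg Hg' (or_introl eq_refl) E eq_refl) as H.
      replace (L + 1 - L * 1) with 1 in H by ring. exact H.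
  - assert (E : fr o b' = (fst (fr o b), snd (fr o b) + -1)) by (rewrite (surjective_pairing (fr o b')); f_equal; lia).
    exists o, L, (Z.to_nat (Z.abs (j - 1)) * T + T)%nat. split; [auto|split].
    + assert (Z.to_nat (Z.abs (j - 1)) <= Z.to_nat L - 1)%nat by lia. nia.
    + eapply run_trans. apply (sweep o b j 1); auto; lia.
      pose proof (pcross o b b' (-1) 1 Hg Hg' (or_intror eq_refl) E eq_refl) as H.
      replace (1 + -1 - L * -1) with L in H by ring. exact H.
  - assert (E : fr o b' = (fst (fr o b) + 1, snd (fr o b))) by (rewrite (surjective_pairing (fr o b')); f_equal; lia).
    pose proof (fr_neg_eq o b b' 1 E) as E'.
    exists (negb o), 1, (Z.to_nat (L-1) * T + Z.to_nat (L-1) * T + T)%nat. split; [auto|split].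
    + nia.
    + eapply run_trans. apply (turn o b j (if Z.eqb j 1 then 1 else -1) 1 1 L); auto.
      { destruct Hj as [->| ->]; [left; auto|right; split; auto]. destruct (Z.eqb_spec L 1); lia. }
      pose proof (pcross (negb o) b b' 1 L Hg Hg' (or_introl eq_refl) E' eq_refl) as H.
      replace (L + 1 - L * 1) with 1 in H by ring. exact H.
  - assert (E : fr o b' = (fst (fr o b) + -1, snd (fr o b))) by (rewrite (surjective_pairing (fr o b')); f_equal; lia).
    pose proof (fr_neg_eq o b b' (-1) E) as E'.
    exists (negb o), L, (Z.to_nat (L-1) * T + Z.to_nat (L-1) * T + T)%nat. split; [auto|split].
    + nia.
    + eapply run_trans. apply (turn o b j (if Z.eqb j 1 then 1 else -1) L (-1) 1); auto.
      { destruct Hj as [->| ->]; [left; auto|right; split; auto]. destruct (Z.eqb_spec L 1); lia. }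
      pose proof (pcross (negb o) b b' (-1) 1 Hg Hg' (or_intror eq_refl) E' eq_refl) as H.
      replace (1 + -1 - L * -1) with L in H by ring. exact H.
Qed.

Lemma to_origin o b j : good_box L omega eta b -> 1 <= j <= L -> in_box L b (0,0) ->
  exists j' n, (n <= (Z.to_nat L - 1) * T)%nat /\ runL (lineS o b j) n (lineS o b j') /\ 1 <= j' <= L
    /\ memL o b j' 1 L (0,0) = true.
Proof.
  intros Hg Hj Hin. set (j' := snd (fr o (0,0)) - L * snd (fr o b)).
  assert (Hf : 1 <= j' <= L /\ L * fst (fr o b) + 1 <= fst (fr o (0,0)) <= L * fst (fr o b) + L).
  { unfold j'; destruct o, b; unfold in_box in Hin; cbn [fr pt fst snd] in *; lia. }
  exists j', (Z.to_nat (Z.abs (j - j')) * T)%nat. split.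
  - assert (Z.to_nat (Z.abs (j - j')) <= Z.to_nat L - 1)%nat by lia. nia.
  - split; [apply sweep; auto; lia| split; [lia|]].
    unfold memL. apply andb_true_iff; split; [apply andb_true_iff; split|];
      [apply Z.eqb_eq; unfold j'; lia|apply Z.leb_le; lia|apply Z.leb_le; lia].
Qed.

Lemma pad_step o b j : good_box L omega eta b -> 1 <= j <= L -> stepL (lineS o b j) (Pl o b j 2) (lineS o b j).
Proof.
  intros Hg Hj.
  assert (HinL : forall k, 1 <= k <= L -> lineS o b j (Pl o b j k) = true).
  { intros k Hk. unfold lineS. rewrite (proj2 (memL_spec o b j 1 L _)); [apply orb_true_r| exists k; auto]. }
  assert (HY : forall y, lineS o b j y <> eta y -> In y (Yl (Pl o b j 2))).
  { intros y Hy. apply orb_diff in Hy. apply Y_spec with b; [lia|apply Pl_inbox; lia|]. eapply memL_rect; eauto; lia. }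
  assert (Hc : card_le (fun y => lineS o b j y <> eta y) Dn).
  { exists (lineList o b j). split. rewrite lineList_len. unfold Dn; lia.
    intros y Hy. apply orb_diff in Hy. eapply lineList_in; eauto; lia. }
  unfold step. split; [|split; [|split; [|split; [|split; [|split]]]]]; auto.
  - apply gb_omega; auto; lia.
  - apply (constraint_two omega _ _ (Pl o b j 1) (Pl o b j 3)).
    + apply Pl_nb; lia.
    + apply Pl_nb; lia.
    + apply Pl_neq; lia.
    + apply gb_omega; auto; lia.
    + apply HinL; lia.
    + apply gb_omega; auto; lia.
    + apply HinL; lia.
Qed.

Lemma travel : forall (K : nat) (g : nat -> site),
  (forall k, (k < K)%nat -> nn (g k) (g (S k))) -> (forall k, (k <= K)%nat -> good_box L omega eta (g k)) ->
  in_box L (g K) (0,0) -> forall o j, (j = 1 \/ j = L) ->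
  exists o' j' n, (n <= (2 * Z.to_nat L * K + (Z.to_nat L - 1)) * T)%nat /\
    runL (lineS o (g 0%nat) j) n (lineS o' (g K) j') /\ 1 <= j' <= L /\ memL o' (g K) j' 1 L (0,0) = true.
Proof.
  induction K; intros g Hnn Hg Hin o j Hj.
  - destruct (to_origin o (g 0%nat) j (Hg 0%nat (le_n 0)) ltac:(lia) Hin) as (j' & n & Hn & Hr & Hj' & Hm).
    exists o, j', n. split; [lia|auto].
  - destruct (exit o (g 0%nat) (g 1%nat) j (Hg 0%nat ltac:(lia)) (Hg 1%nat ltac:(lia)) (Hnn 0%nat ltac:(lia)) Hj)
      as (o1 & j1 & n1 & Hj1 & Hn1 & Hr1).
    destruct (IHK (fun k => g (S k))) with (o := o1) (j := j1) as (o' & j' & n2 & Hn2 & Hr2 & Hj' & Hm); auto.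
    + intros k Hk; apply Hnn; lia.
    + intros k Hk; apply Hg; lia.
    + exists o', j', (n1 + n2)%nat. split; [|split; [eapply run_trans; eauto| auto]].
      assert (3 <= Z.to_nat L)%nat by lia. nia.
Qed.

Lemma nn_sym a b : nn a b -> nn b a.
Proof. unfold nn; lia. Qed.

Lemma reach l : event_E L l omega eta ->
  exists o b j n, (n <= 4 * Z.to_nat L * Z.to_nat L * l)%nat /\ runL eta n (lineS o b j) /\
    good_box L omega eta b /\ 1 <= j <= L /\ memL o b j 1 L (0,0) = true.
Proof.
  intros (p & (Hlen & Hnd & Hnn) & (Hgood & bf & Hbf & Hfull) & bo & Hbo & Hin).
  destruct (In_nth p bf (0,0) Hbf) as (f & Hf & Ef).
  destruct (In_nth p bo (0,0) Hbo) as (oi & Ho & Eo).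
  assert (Hgn : forall k, (k < length p)%nat -> good_box L omega eta (nth k p (0,0)))
    by (intros; apply Hgood; apply nth_In; auto).
  assert (HF : exists of jf, 1 <= jf <= L /\ lineS of bf jf = eta).
  { destruct Hfull as [(j & Hj & Hall) | (i & Hi & Hall)].
    - exists false, j. split; auto. apply functional_extensionality; intro y. unfold lineS.
      destruct (memL false bf j 1 L y) eqn:E; [|apply orb_false_r]. apply memL_spec in E.
      destruct E as (k & Hk & ->). rewrite orb_true_r. symmetry. destruct bf. apply (Hall k Hk).
    - exists true, i. split; auto. apply functional_extensionality; intro y. unfold lineS.
      destruct (memL true bf i 1 L y) eqn:E; [|apply orb_false_r]. apply memL_spec in E.
      destruct E as (k & Hk & ->). rewrite orb_true_r. symmetry. destruct bf. apply (Hall k Hk). }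
  destruct HF as (of & jf & Hjf & Ef').
  assert (Hgen : forall K (g : nat -> site), (forall k, (k < K)%nat -> nn (g k) (g (S k))) ->
     (forall k, (k <= K)%nat -> good_box L omega eta (g k)) -> g 0%nat = bf -> g K = bo -> (K < l)%nat ->
     exists o b j n, (n <= 4 * Z.to_nat L * Z.to_nat L * l)%nat /\ runL eta n (lineS o b j) /\
       good_box L omega eta b /\ 1 <= j <= L /\ memL o b j 1 L (0,0) = true).
  { intros K g H1 H2 H3 H4 H5. rewrite <- H3 in Ef'. rewrite <- H4 in Hin.
    destruct (travel K g H1 H2 Hin of 1 (or_introl eq_refl)) as (o' & j' & n & Hn & Hr & Hj' & Hm).
    exists o', (g K), j', (Z.to_nat (Z.abs (jf - 1)) * T + n)%nat. split; [|split; [| split; [apply H2; lia| auto]]].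
    - apply (bound (Z.to_nat L) K l _ n T); try lia. unfold T; lia.
    - assert (Hs : runL (lineS of (g 0%nat) jf) (Z.to_nat (Z.abs (jf - 1)) * T) (lineS of (g 0%nat) 1))
        by (apply sweep; auto; try lia; apply H2; lia).
      pose proof (@run_trans omega eta (Yf L) Dn _ _ _ _ _ Hs Hr) as H. rewrite Ef' in H. exact H. }
  destruct (Nat.le_gt_cases f oi).
  - apply (Hgen (oi - f)%nat (fun k => nth (f + k) p (0,0))).
    + intros k Hk. rewrite Nat.add_succ_r. apply Hnn. lia.
    + intros k Hk. apply Hgn. lia.
    + rewrite Nat.add_0_r; auto.
    + replace (f + (oi - f))%nat with oi by lia. auto.
    + lia.
  - apply (Hgen (f - oi)%nat (fun k => nth (f - k) p (0,0))).
    + intros k Hk. apply nn_sym. replace (f - k)%nat with (S (f - S k)) by lia. apply Hnn. lia.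
    + intros k Hk. apply Hgn. lia.
    + rewrite Nat.sub_0_r; auto.
    + replace (f - (f - oi))%nat with oi by lia. auto.
    + lia.
Qed.

End Conf.
End Geo.

Lemma site_eqb_spec x y : site_eqb x y = true <-> x = y.
Proof.
  destruct x, y; unfold site_eqb; simpl. rewrite andb_true_iff, !Z.eqb_eq.
  split; [intros [-> ->]; auto | intros H; inversion H; auto].
Qed.

Lemma flip_or_eq (s s' : config) x : (forall y, y <> x -> s' y = s y) -> s' = flip s x \/ s' = s.
Proof.
  intros H. destruct (Bool.bool_dec (s' x) (s x)) as [E|E].
  - right. apply functional_extensionality; intro y. destruct (site_eqb y x) eqn:Ey.
    + apply site_eqb_spec in Ey. subst; auto.
    + apply H. intros ->. rewrite (proj2 (site_eqb_spec x x) eq_refl) in Ey. discriminate.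
  - left. apply functional_extensionality; intro y. unfold flip. destruct (site_eqb y x) eqn:Ey.
    + apply site_eqb_spec in Ey; subst. destruct (s' x), (s x); simpl; congruence.
    + apply H. intros ->. rewrite (proj2 (site_eqb_spec x x) eq_refl) in Ey. discriminate.
Qed.

Lemma run_seq omega eta Y D s n s' : run omega eta Y D s n s' ->
  exists (cs : nat -> config) (xs : nat -> site), cs 0%nat = s /\ cs n = s' /\
    forall i, (i < n)%nat -> step omega eta Y D (cs i) (xs i) (cs (S i)).
Proof.
  induction 1.
  - exists (fun _ => s), (fun _ => (0,0)). split; [reflexivity|split; [reflexivity|intros; lia]].
  - destruct IHrun as (cs & xs & E0 & E1 & E2).
    exists (fun i => match i with O => s | S i' => cs i' end), (fun i => match i with O => x | S i' => xs i' end).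
    split; [auto|split; [auto|]].
    intros [|i] Hi; [rewrite E0; auto| apply E2; lia].
Qed.

Lemma scaleL_ge3 eps q : (0 < eps)%R -> (0 < q)%R -> (q < / 4)%R -> 3 <= scaleL q eps.
Proof.
  intros He Hq Hq4. unfold scaleL, Rpower.
  assert (Hln : (ln q < 0)%R).
  { rewrite <- ln_1. apply ln_increasing; lra. }
  assert (H1 : (- ln q < (-1 - eps / 3) * ln q)%R) by nra.
  assert (H2 : (/ q = exp (- ln q))%R) by (rewrite exp_Ropp, exp_ln; auto).
  assert (H3 : (4 < / q)%R).
  { apply (Rmult_lt_reg_r q); [lra|]. rewrite Rinv_l by lra. lra. }
  assert (H4 : (4 < exp ((-1 - eps / 3) * ln q))%R).
  { rewrite H2 in H3. apply Rlt_trans with (1 := H3). apply exp_increasing. auto. }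
  set (x := exp ((-1 - eps / 3) * ln q)) in *.
  unfold Int_part. destruct (archimed x) as [A1 A2].
  assert (4 < up x)%Z by (apply lt_IZR; lra). lia.
Qed.

Theorem proposition2 :
  forall eps : R, (0 < eps)%R ->
  exists q0 : R, (0 < q0)%R /\
  forall q : R, (0 < q)%R -> (q < q0)%R ->
  let L := scaleL q eps in
  let l := Z.to_nat (scalel q eps) in
  let N := (4 * Z.to_nat L * Z.to_nat L * l)%nat in
  let D := (3 * Z.to_nat L)%nat in
  let V := (3 * Z.to_nat L * Z.to_nat L)%nat in
  forall omega : env,
  exists Y : site -> list site,
    (forall x, (length (Y x) <= V)%nat) /\
    forall eta : config, event_E L l omega eta ->
    exists (etas : nat -> config) (xs : nat -> site),
      etas 0%nat = eta /\
      event_A omega (etas N) /\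
      (forall i, (i < N)%nat ->
         omega (xs i) = true /\
         (etas (S i) = flip (etas i) (xs i) \/ etas (S i) = etas i) /\
         constraint omega (etas i) (xs i)) /\
      (forall i, (i <= N)%nat -> card_le (fun y => etas i y <> eta y) D) /\
      (forall i, (i < N)%nat -> forall y, etas i y <> eta y -> In y (Y (xs i))).
Proof.
  intros eps Heps. exists (/ 4)%R. split; [lra|].
  intros q Hq Hq0 L l N D V omega.
  assert (HL : 3 <= L) by exact (scaleL_ge3 eps q Heps Hq Hq0).
  exists (Yf L). split; [intros x; apply Yf_len; auto|].
  intros eta HE.
  destruct (reach L HL omega eta l HE) as (o & b & j & n & Hn & Hr & Hg & Hj & Hm).
  assert (HnN : (n <= N)%nat) by exact Hn.
  pose proof (pad_step L HL omega eta o b j Hg Hj) as Hpad.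
  assert (Hr' : run omega eta (Yf L) (Dn L) eta N (lineS L eta o b j)).
  { replace N with (n + (N - n))%nat by lia. eapply run_trans; [exact Hr|].
    apply (run_pad _ _ _ _ _ _ _ Hpad). }
  destruct (run_seq _ _ _ _ _ _ _ Hr') as (cs & xs & H0 & HN & Hst).
  exists cs, xs. split; [auto|split; [|split; [|split]]].
  - rewrite HN. split.
    + pose proof Hm as Hm'. apply memL_spec in Hm'. destruct Hm' as (k & Hk & E). rewrite E. apply (gb_omega L omega eta); auto.
    + unfold lineS. rewrite Hm. apply orb_true_r.
  - intros i Hi. destruct (Hst i Hi) as (H1 & H2 & H3 & _). split; auto. split; auto. apply flip_or_eq; auto.
  - intros i Hi. destruct (Nat.eq_dec i N) as [->|Hne].
    + rewrite HN. destruct Hpad as (_ & _ & _ & _ & _ & Hc & _). exact Hc.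
    + destruct (Hst i ltac:(lia)) as (_ & _ & _ & _ & _ & Hc & _). exact Hc.
  - intros i Hi y Hy. destruct (Hst i Hi) as (_ & _ & _ & H4 & _). auto.
Qed.
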